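(* Let $p$ be an odd prime, let $l>2$ be an integer with $l\mid p-1$, and let $\omega$ be a primitive $l$-th root of unity in $\mathbb{F}_p$. Let $n=lp$ if $l$ is even and $n=2lp$ if $l$ is odd. For each $(r_1,r_2,r_3)\in\{(2,1,1),(1,2,1),(1,1,2)\}$, the cyclic code $\mathcal{C}_{(r_1,r_2,r_3)}$ of length $n$ over $\mathbb{F}_p$ generated by $(x-1)^{r_1}(x+1)^{r_2}(x-\omega)^{r_3}$ is an MDS symbol-pair code with minimum symbol-pair distance $d_p=6$.
   Context: For $\mathbf{x}=(x_0,\dots,x_{n-1})\in\mathbb{F}_p^n$, the symbol-pair weight is $\omega_p(\mathbf{x})=|\{i:(x_i,x_{i+1})\neq(0,0)\}|$ (indices modulo $n$), and the symbol-pair distance is $D_p(\mathbf{x},\mathbf{y})=|\{i:(x_i,x_{i+1})\neq(y_i,y_{i+1})\}|$. The minimum symbol-pair distance $d_p(\mathcal{C})$ is the minimum of $D_p$ over distinct codewords. A code of length $n$ with minimum symbol-pair distance $d_p$ is an MDS symbol-pair code if $|\mathcal{C}|=p^{n-d_p+2}$. Vectors are identified with polynomials in $\mathbb{F}_p[x]/\langle x^n-1\rangle$; the cyclic code generated by $g(x)\mid x^n-1$ is the ideal $\langle g(x)\rangle$. *)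

(* Defs.v *)
From HB Require Import structures.
From mathcomp Require Import all_boot all_order all_algebra.
Set Implicit Arguments.
Unset Strict Implicit.
Unset Printing Implicit Defensive.
Import GRing.Theory.
Local Open Scope ring_scope.

Section SymbolPair.
Variables (F : finFieldType) (n : nat).

Definition pair_weight (x : 'rV[F]_n) : nat :=
  #|[set i : 'I_n | (x ord0 i != 0) || (x ord0 (ordS i) != 0)]|.

Definition pair_dist (x y : 'rV[F]_n) : nat :=
  #|[set i : 'I_n | (x ord0 i != y ord0 i) || (x ord0 (ordS i) != y ord0 (ordS i))]|.

(* the cyclic code <g(x)> in F[x]/<x^n - 1>; elements of the quotient ring are
   represented by their unique representative of degree < n (coefficient
   vectors 'rV_n), the codewords being the coefficient vectors of
   (g * f) mod (x^n - 1). *)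
Definition cyclic_code (g : {poly F}) : {set 'rV[F]_n} :=
  [set poly_rV ((g * rVpoly f) %% ('X^n - 1)) | f : 'rV[F]_n].

Definition min_pair_dist_is (C : {set 'rV[F]_n}) (d : nat) : Prop :=
  (exists x y, [/\ x \in C, y \in C, x != y & pair_dist x y = d]) /\
  (forall x y, x \in C -> y \in C -> x != y -> (d <= pair_dist x y)%N).

Definition MDS_symbol_pair (C : {set 'rV[F]_n}) (d : nat) : Prop :=
  min_pair_dist_is C d /\ #|C| = (#|F| ^ (n - d + 2))%N.

End SymbolPair.

(* Main.v *)
Require Import Defs.
From HB Require Import structures.
From mathcomp Require Import all_boot all_order all_algebra zify ring.
Import GRing.Theory.
Local Open Scope ring_scope.

Lemma uniqA m n : (3 < m)%N -> (m <= n.-2)%N -> uniq [:: 0; 1; m.-2; m.-1; m; n.-1]%N.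
Proof. by move=> h1 h2; rewrite /= !inE; lia. Qed.

Lemma uniqB k m n : (2 <= k)%N -> (k <= m.-2)%N -> (m <= n.-2)%N ->
  uniq [:: 0; k.-1; k; m.-1; m; n.-1]%N.
Proof. by move=> h1 h2 h3; rewrite /= !inE; lia. Qed.

Section Gen.
Variables (F : finFieldType) (n : nat) (g : {poly F}).
Hypothesis gM : g %| 'X^n - 1.
Hypothesis n0 : (0 < n)%N.
Hypothesis g0 : g != 0.

Lemma size_M : size ('X^n - 1 : {poly F}) = n.+1.
Proof. exact: size_Xn_sub_1. Qed.

Lemma size_rVpoly (x : 'rV[F]_n) : (size (rVpoly x) <= n)%N.
Proof. exact: size_poly. Qed.

Lemma code_mem x : (x \in cyclic_code n g) = (g %| rVpoly x).
Proof.
apply/idP/idP.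
  case/imsetP => f _ ->.
  rewrite poly_rV_K; last first.
    by rewrite -ltnS -size_M ltn_modp -size_poly_eq0 size_M.
  by rewrite -dvdp_mod // dvdp_mulr.
move=> gx; apply/imsetP; exists (poly_rV (rVpoly x %/ g)%R) => //.
have sq : (size (rVpoly x %/ g)%R <= n)%N.
  by rewrite size_divp // (leq_trans (leq_subr _ _)) // size_poly.
rewrite poly_rV_K // mulrC divpK // modp_small; first by rewrite rVpolyK.
by rewrite size_M ltnS size_rVpoly.
Qed.


Lemma size_gh d (h : 'rV[F]_(n - d)) : size g = d.+1 -> (d <= n)%N ->
  (size (g * rVpoly h)%R <= n)%N.
Proof.
move=> sg dn; apply: (leq_trans (size_mul_leq _ _)); rewrite sg /=.
have sh : (size (rVpoly h) <= n - d)%N by exact: size_poly.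
move: sh; set s := size _; lia.
Qed.

Lemma code_card d : size g = d.+1 -> (d <= n)%N ->
  #|cyclic_code n g| = (#|F| ^ (n - d))%N.
Proof.
move=> sg dn.
have -> : cyclic_code n g = [set (poly_rV (g * rVpoly h) : 'rV_n) | h : 'rV[F]_(n-d)].
  apply/setP => x; rewrite code_mem; apply/idP/imsetP.
    move=> gx; exists (poly_rV (rVpoly x %/ g)%R) => //.
    rewrite poly_rV_K; first by rewrite mulrC divpK // rVpolyK.
    by rewrite size_divp // sg /= leq_sub2r // size_poly.
  by case=> h _ ->; rewrite poly_rV_K ?dvdp_mulr ?size_gh.
rewrite card_imset ?cardsT ?card_mx ?mul1n //.
move=> h1 h2 /(congr1 rVpoly); rewrite !poly_rV_K ?size_gh //.
by move/(mulfI g0); apply: (can_inj rVpolyK).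
Qed.


Lemma coef_rV_lt (x : 'rV[F]_n) (i : 'I_n) : (rVpoly x)`_i = x 0 i.
Proof. by rewrite coef_rVpoly valK. Qed.

Lemma coef_rV_ge (x : 'rV[F]_n) k : (n <= k)%N -> (rVpoly x)`_k = 0.
Proof. by move=> nk; rewrite coef_rVpoly insubN // -leqNgt. Qed.

Definition rotl (x : 'rV[F]_n) : 'rV[F]_n := \row_i x 0 (ordS i).

Lemma rotl_poly (x : 'rV[F]_n) :
  'X * rVpoly (rotl x) = rVpoly x + (x 0 (Ordinal n0))%:P * ('X^n - 1).
Proof.
apply/polyP => k; rewrite coefXM coefD coefCM coefB coefXn coefC.
case: k => [|k] /=.
  have /= -> := coef_rV_lt x (Ordinal n0).
  have -> : (0%N == n) = false by rewrite eq_sym gtn_eqF.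
  by rewrite sub0r mulrN1 subrr.
rewrite /=; case: (ltngtP k.+1 n) => kn.
- have /= -> := coef_rV_lt x (Ordinal kn).
  have /= -> := coef_rV_lt (rotl x) (Ordinal (ltnW kn)); rewrite mxE.
  rewrite subr0 mulr0 addr0; congr (x 0 _); apply: val_inj => /=.
  by rewrite modn_small.
- by rewrite !coef_rV_ge ?(ltnW kn) // subrr mulr0 addr0.
- rewrite (@coef_rV_ge x k.+1) ?kn // subr0 mulr1 add0r.
  have kn' : (k < n)%N by rewrite -kn.
  have /= -> := coef_rV_lt (rotl x) (Ordinal kn'); rewrite mxE; congr (x 0 _); apply: val_inj => /=.
  by rewrite kn modnn.
Qed.

Lemma rotl_code (x : 'rV[F]_n) : g.[0] != 0 -> g %| rVpoly x -> g %| rVpoly (rotl x).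
Proof.
move=> gr0 gx.
have cop : coprimep g 'X by rewrite -[X in coprimep _ X]subr0 -polyC0 coprimep_XsubC rootE.
rewrite -(Gauss_dvdpl _ cop) mulrC rotl_poly dvdp_add //.
by rewrite dvdp_mull.
Qed.

Lemma rotl_weight (x : 'rV[F]_n) : pair_weight (rotl x) = pair_weight x.
Proof.
rewrite /pair_weight -(card_imset _ (@ordS_inj n)); apply: eq_card => i.
rewrite inE; apply/imsetP/idP.
  by case=> j; rewrite inE !mxE => + ->.
move=> H; exists (ord_pred i); last by rewrite ord_predK.
by rewrite inE !mxE ord_predK.
Qed.



Lemma iter_rotl_coef k (x : 'rV[F]_n) (i : 'I_n) :
  (iter k rotl x) 0 i = x 0 (Ordinal (ltn_pmod (i + k) n0)).
Proof.
elim: k i => [|k IH] i /=.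
  by congr (x 0 _); apply: val_inj => /=; rewrite addn0 modn_small.
rewrite mxE IH; congr (x 0 _); apply: val_inj => /=.
by rewrite modnDml addSnnS.
Qed.

Lemma iter_ordS k (i : 'I_n) : val (iter k (@ordS n) i) = ((i + k) %% n)%N.
Proof.
elim: k => [|k IH] /=; first by rewrite addn0 modn_small.
by rewrite IH -addn1 modnDml addn1 addnS.
Qed.

Lemma run_start (x : 'rV[F]_n) : x != 0 -> (exists i, x 0 i == 0) ->
  exists i, x 0 i != 0 /\ x 0 (ord_pred i) = 0.
Proof.
move=> xn0 [i /eqP xi].
case: (pickP (fun j => (x 0 j != 0) && (x 0 (ord_pred j) == 0))) => [j /andP[a /eqP b] | H].
  by exists j.
exfalso; move/negP: xn0; apply; apply/eqP/rowP => j; rewrite mxE.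
have Hk : forall k, x 0 (iter k (@ordS n) i) = 0.
  elim => // k IH /=.
  by have := H (ordS (iter k (@ordS n) i)); rewrite ordSK IH eqxx andbT => /negbFE/eqP.
have <- // : iter (j + (n - i)) (@ordS n) i = j.
apply: val_inj; rewrite iter_ordS addnCA subnKC ?(ltnW (ltn_ord i)) //.
by rewrite modnDr modn_small.
Qed.


Lemma count_T (T : {set 'I_n}) (s : seq nat) : uniq s ->
  all (fun k => [exists i : 'I_n, (val i == k) && (i \in T)]) s -> (size s <= #|T|)%N.
Proof.
move=> us /allP hs.
set s' := map (insubd (Ordinal n0)) s.
have us' : uniq s'.
  rewrite map_inj_in_uniq // => a b /hs /existsP [i /andP [/eqP <- _]].
  move=> /hs /existsP [j /andP [/eqP <- _]] /(congr1 val).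
  by rewrite !val_insubd !ltn_ord.
rewrite -(size_map (insubd (Ordinal n0))) -(card_uniqP us').
apply: subset_leq_card; apply/subsetP => i /mapP [k /hs /existsP [j /andP [/eqP <- jT]] ->].
have -> // : insubd (Ordinal n0) (val j) = j by apply: val_inj; rewrite val_insubd ltn_ord.
Qed.

Lemma poly_supp (c : {poly F}) (s : seq nat) : uniq s ->
  (forall t, t \notin s -> c`_t = 0) -> c = \sum_(t <- s) c`_t *: 'X^t.
Proof.
move=> us hs; apply/polyP => t; rewrite coef_sum.
case ts: (t \in s).
  rewrite (bigD1_seq t) //= coefZ coefXn eqxx mulr1 big1_seq ?addr0 // => u /andP [ut _].
  by rewrite coefZ coefXn eq_sym (negbTE ut) mulr0.
rewrite hs ?ts // big1_seq // => u /andP [_ us2].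
rewrite coefZ coefXn; case: eqP => [ut|]; last by rewrite mulr0.
by move: ts; rewrite ut us2.
Qed.


Hypothesis sg : size g = 5.
Hypothesis H2 : forall (a b : F) m, a != 0 -> b != 0 -> (0 < m < n)%N ->
  ~~ (g %| a%:P + b *: 'X^m).
Hypothesis H3a : forall (a b d : F) j, a != 0 -> b != 0 -> d != 0 -> (0 < j)%N ->
  ~~ (g %| a%:P + b *: 'X^j + d *: 'X^(j.+1)).
Hypothesis H3b : forall (a b d : F) m, a != 0 -> b != 0 -> d != 0 -> (1 < m)%N ->
  ~~ (g %| a%:P + b *: 'X + d *: 'X^m).

Lemma norm_lb (y : 'rV[F]_n) : g %| rVpoly y -> y 0 (Ordinal n0) != 0 ->
  (forall i : 'I_n, val i = n.-1 -> y 0 i = 0) -> (6 <= pair_weight y)%N.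
Proof.
move=> gc y0 ylast.
set c := rVpoly y in gc *.
have c0 : c`_0 = y 0 (Ordinal n0) by have /= := coef_rV_lt y (Ordinal n0).
have cnz : c != 0 by apply: contraNneq y0 => ce; rewrite -c0 ce coef0.
have sc5 : (5 <= size c)%N by rewrite -[5%N]sg dvdp_leq.
have scn : (size c <= n)%N := size_poly _ _.
have Hl : (n.-1 < n)%N by rewrite prednK.
have cl : c`_n.-1 = 0.
  by have /= -> := coef_rV_lt y (Ordinal Hl); apply: ylast.
have scn' : (size c <= n.-1)%N.
  rewrite leqNgt; apply/negP => h.
  have e : (size c).-1 = n.-1 by lia.
  by move/eqP: cnz; apply; apply/eqP; rewrite -lead_coef_eq0 lead_coefE e cl.
set m := (size c).-1.
have m4 : (4 <= m)%N by rewrite /m; lia.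
have mn : (m <= n.-2)%N by rewrite /m; lia.
have cm : c`_m != 0 by rewrite -lead_coefE lead_coef_eq0.
have sc0 : (0 < size c)%N by rewrite size_poly_gt0.
have cgt : forall k, (m < k)%N -> c`_k = 0.
  move=> k mk; rewrite nth_default // -(prednK sc0); exact: mk.
set T := [set i : 'I_n | (y ord0 i != 0) || (y ord0 (ordS i) != 0)].
have inTmid : forall k, (k.+1 < n)%N -> (c`_k != 0) || (c`_k.+1 != 0) ->
    [exists i : 'I_n, (val i == k) && (i \in T)].
  move=> k hk hc; apply/existsP; exists (Ordinal (ltnW hk)); rewrite /= eqxx inE /=.
  have /= <- := coef_rV_lt y (Ordinal (ltnW hk)).
  have -> : ordS (Ordinal (ltnW hk)) = Ordinal hk by apply: val_inj; rewrite /= modn_small.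
  by have /= <- := coef_rV_lt y (Ordinal hk).
have inTlast : [exists i : 'I_n, (val i == n.-1) && (i \in T)].
  apply/existsP; exists (Ordinal Hl); rewrite /= eqxx inE /=; apply/orP; right.
  have -> : ordS (Ordinal Hl) = Ordinal n0 by apply: val_inj; rewrite /= prednK // modnn.
  exact: y0.
rewrite /pair_weight -/T.
have h0 : [exists i : 'I_n, (val i == 0%N) && (i \in T)].
  by apply: inTmid; [lia | rewrite c0 y0].
have hm1 : [exists i : 'I_n, (val i == m.-1) && (i \in T)].
  by apply: inTmid; [lia | rewrite prednK ?cm ?orbT //; lia].
have hm : [exists i : 'I_n, (val i == m) && (i \in T)].
  by apply: inTmid; [lia | rewrite cm].
have sz : forall s : seq nat, uniq s -> (forall t, t \notin s -> c`_t = 0) ->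
    g %| \sum_(t <- s) c`_t *: 'X^t by move=> s us hs; rewrite -poly_supp.
have cnz0 : c`_0 != 0 by rewrite c0.
case: (boolP ((c`_1 != 0) || (c`_2 != 0))) => h1.
  case: (boolP ((c`_m.-2 != 0) || (c`_m.-1 != 0))) => h2.
    apply: leq_trans (count_T T [:: 0; 1; m.-2; m.-1; m; n.-1]%N _ _).
    + by [].
    + exact: uniqA.
    + rewrite /= h0 hm1 hm inTlast inTmid //; last by move: m4 mn; clear; lia.
      by rewrite andbT inTmid // ?prednK //; move: m4 mn; clear; lia.
  move/norP: h2 => [/negPn/eqP cm2 /negPn/eqP cm1].
  case: (boolP (has (fun k => c`_k != 0) (iota 2 (m - 4)))).
    case/hasP => k; rewrite mem_iota => /andP [k2 km] ck.
    apply: leq_trans (count_T T [:: 0; k.-1; k; m.-1; m; n.-1]%N _ _).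
    + by [].
    + by apply: uniqB; move: k2 km m4 mn; clear; lia.
    + rewrite /= h0 hm1 hm inTlast inTmid ?prednK ?ck //; try by move: k2 km m4 mn; clear; lia.
      by rewrite inTmid ?ck //; move: k2 km m4 mn; clear; lia.
  move/hasPn => hz.
  have zmid : forall t, (2 <= t < m)%N -> c`_t = 0.
    move=> t /andP [t2 tm].
    have [tl|tl] := ltnP t m.-2.
      by apply/eqP/negPn/hz; rewrite mem_iota t2 /=; move: tl m4; clear; lia.
    have : t = m.-2 \/ t = m.-1 by move: tl tm m4; clear; lia.
    by case=> ->.
  case: (boolP (c`_1 != 0)) => c1.
    have := sz [:: 0; 1; m]%N.
    rewrite !big_cons big_nil addr0 expr0 alg_polyC expr1 addrA => H.
    have m1 : (1 < m)%N by move: m4; clear; lia.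
    have := H3b _ _ _ _ cnz0 c1 cm m1; rewrite H //.
      by rewrite /= !inE; move: m4; clear; lia.
    move=> t; rewrite !inE => tn.
    have [/cgt //|tm'] := ltnP m t.
    by apply: zmid; move: tn tm'; clear; lia.
  move/negPn/eqP: c1 => c1.
  have := sz [:: 0; m]%N.
  rewrite !big_cons big_nil addr0 expr0 alg_polyC => H.
  have m1 : (0 < m < n)%N by move: m4 mn n0; clear; lia.
  have := H2 _ _ _ cnz0 cm m1; rewrite H //.
    by rewrite /= !inE; move: m4; clear; lia.
  move=> t; rewrite !inE => tn.
  have [/cgt //|tm'] := ltnP m t.
  have [t1|t1] := leqP t 1; first by have -> : t = 1%N by move: tn t1; clear; lia.
  by apply: zmid; move: tn t1 tm'; clear; lia.
move/norP: h1 => [/negPn/eqP c1 /negPn/eqP c2].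
case: (boolP (has (fun k => c`_k != 0) (iota 3 (m - 4)))).
  case/hasP => k; rewrite mem_iota => /andP [k2 km] ck.
  apply: leq_trans (count_T T [:: 0; k.-1; k; m.-1; m; n.-1]%N _ _).
  + by [].
  + by apply: uniqB; move: k2 km m4 mn; clear; lia.
  + rewrite /= h0 hm1 hm inTlast inTmid ?prednK ?ck //; try by move: k2 km m4 mn; clear; lia.
    by rewrite inTmid ?ck //; move: k2 km m4 mn; clear; lia.
move/hasPn => hz.
have zmid : forall t, (1 <= t < m.-1)%N -> c`_t = 0.
  move=> t /andP [t2 tm].
  have [tl|tl] := leqP t 2.
    have : t = 1%N \/ t = 2%N by move: t2 tl; clear; lia.
    by case=> ->.
  by apply/eqP/negPn/hz; rewrite mem_iota; move: tl tm m4; clear; lia.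
case: (boolP (c`_m.-1 != 0)) => c1'.
  have := sz [:: 0; m.-1; m]%N.
  rewrite !big_cons big_nil addr0 expr0 alg_polyC addrA => H.
  have Hm : m = (m.-1).+1 by move: m4; clear; lia.
  have m1 : (0 < m.-1)%N by move: m4; clear; lia.
  have := H3a _ _ _ _ cnz0 c1' cm m1; rewrite -Hm H //.
    by rewrite /= !inE; move: m4; clear; lia.
  move=> t; rewrite !inE => tn.
  have [/cgt //|tm'] := ltnP m t.
  by apply: zmid; move: tn tm'; clear; lia.
move/negPn/eqP: c1' => c1'.
have := sz [:: 0; m]%N.
rewrite !big_cons big_nil addr0 expr0 alg_polyC => H.
have m1 : (0 < m < n)%N by move: m4 mn n0; clear; lia.
have := H2 _ _ _ cnz0 cm m1; rewrite H //.
  by rewrite /= !inE; move: m4; clear; lia.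
move=> t; rewrite !inE => tn.
have [/cgt //|tm'] := ltnP m t.
have [t1|t1] := leqP m.-1 t; first by have -> : t = m.-1 by move: tn t1 tm'; clear; lia.
by apply: zmid; move: tn t1 tm'; clear; lia.
Qed.


Hypothesis g00 : g.[0] != 0.
Hypothesis n6 : (6 <= n)%N.

Lemma lb (x : 'rV[F]_n) : g %| rVpoly x -> x != 0 -> (6 <= pair_weight x)%N.
Proof.
move=> gx xn0.
case: (boolP [exists i, x 0 i == 0]) => [/existsP hz | /existsPn hnz]; last first.
  rewrite /pair_weight; apply: leq_trans n6 _.
  rewrite -{1}(card_ord n) -cardsT; apply: subset_leq_card; apply/subsetP => i _.
  by rewrite inE (hnz i).
have [i0 [xi0 xp]] := run_start x xn0 hz.
set y := iter i0 rotl x.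
have gy : g %| rVpoly y.
  by rewrite /y; elim: (val i0) => //= k IH; apply: rotl_code.
have wy : pair_weight y = pair_weight x.
  by rewrite /y; elim: (val i0) => //= k IH; rewrite rotl_weight.
rewrite -wy; apply: norm_lb => //.
  rewrite /y iter_rotl_coef; congr (_ != 0): xi0; congr (x 0 _); apply: val_inj => /=.
  by rewrite add0n modn_small.
move=> i iv; rewrite /y iter_rotl_coef -xp; congr (x 0 _); apply: val_inj => /=.
rewrite iv; congr (_ %% n)%N; move: (nat_of_ord i0) n0 => a; clear; lia.
Qed.

End Gen.

Lemma dist_w (F : finFieldType) n (x y : 'rV[F]_n) : pair_dist x y = pair_weight (x - y).
Proof. by apply: eq_card => i; rewrite !inE !mxE !subr_eq0. Qed.

Lemma ub (F : finFieldType) n (n0 : (0 < n)%N) (g : {poly F}) :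
  (size g <= 5)%N -> (5 < n)%N -> (pair_weight (poly_rV g : 'rV[F]_n) <= 6)%N.
Proof.
move=> sg n6.
set s := [seq insubd (Ordinal n0) k | k <- [:: 0; 1; 2; 3; 4; n.-1]%N].
apply: (leq_trans _ (card_size s)); apply: subset_leq_card; apply/subsetP => i.
rewrite inE !mxE => H.
have -> : i = insubd (Ordinal n0) (val i) by apply: val_inj; rewrite val_insubd ltn_ord.
apply: map_f; rewrite !inE.
case: (leqP (val i) 4) => hi; first by move: hi; clear; lia.
case: (eqVneq (val i) n.-1) => [e|hne]; first by rewrite !orbT.
have z1 : g`_i = 0 by rewrite nth_default //; apply: leq_trans sg _.
have z2 : g`_(ordS i) = 0.
  rewrite nth_default //; apply: leq_trans sg _; rewrite /= modn_small; first exact: leqW hi.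
  by move: hne (ltn_ord i) => /= hne hi'; lia.
by move: H; rewrite z1 z2 eqxx.
Qed.

Set Implicit Arguments.
Unset Strict Implicit.

Section Alg.
Variable F : fieldType.
Hypothesis two : (2%:R : F) != 0.

Lemma two_mul (b : F) : b *+ 2 = 0 -> b = 0.
Proof. by move/eqP; rewrite -mulr_natr mulf_eq0 (negbTE two) orbF => /eqP. Qed.

Lemma alg3a (a b d : F) j : b != 0 -> d != 0 ->
  (a%:P + b *: 'X^j + d *: 'X^(j.+1)).[1] = 0 ->
  (a%:P + b *: 'X^j + d *: 'X^(j.+1)).[-1] = 0 -> False.
Proof.
move=> b0 d0; rewrite !hornerE !expr1n !mulr1 exprS -signr_odd.
case: (odd j); rewrite ?expr1 ?expr0 ?mulr1 ?mulrN1 ?mulN1r ?opprK => e1 e2.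
- move/eqP: b0; apply; apply: two_mul; have -> : b *+ 2 = (a + b + d) - (a - b + d * 1) by ring.
  by rewrite e1 e2 subrr.
- move/eqP: d0; apply; apply: two_mul; have -> : d *+ 2 = (a + b + d) - (a + b - d) by ring.
  by rewrite e1 e2 subrr.
Qed.

Lemma alg3b (a b d : F) m : a != 0 -> b != 0 ->
  (a%:P + b *: 'X + d *: 'X^m).[1] = 0 ->
  (a%:P + b *: 'X + d *: 'X^m).[-1] = 0 -> False.
Proof.
move=> a0 b0; rewrite !hornerE !expr1n !mulr1 -signr_odd.
case: (odd m); rewrite ?expr1 ?expr0 ?mulr1 ?mulrN1 ?mulN1r ?opprK => e1 e2.
- move/eqP: a0; apply; apply: two_mul; have -> : a *+ 2 = (a + b + d) + (a - b - d) by ring.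
  by rewrite e1 e2 addr0.
- move/eqP: b0; apply; apply: two_mul; have -> : b *+ 2 = (a + b + d) - (a - b + d) by ring.
  by rewrite e1 e2 subrr.
Qed.

End Alg.

Lemma dvd_root (F : fieldType) (r : F) c : ('X - r%:P) %| c -> c.[r] = 0.
Proof. by rewrite dvdp_XsubCl => /rootP. Qed.

Lemma dvd_deriv (F : fieldType) (r : F) c : ('X - r%:P) ^+ 2 %| c -> c^`().[r] = 0.
Proof.
case/dvdpP => q ->; rewrite derivM deriv_exp !hornerE subrr !expr0n /= !mulr0 !addr0 mulr0; exact: addr0.
Qed.

Lemma ndiv p l m : prime p -> odd p -> (l %| p.-1)%N -> (2 < l)%N -> ~~ odd m ->
  (l %| m)%N -> (p %| m)%N -> ((if odd l then 2 * l * p else l * p) %| m)%N.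
Proof.
move=> pr op lp l2 em lm pm.
have p0 : (0 < p)%N by apply: prime_gt0.
have lp' : (l < p)%N.
  have := dvdn_leq _ lp; move: pr; case: p {op lp pm p0} => // [] [] // p' _ /=.
  by move=> h; have := h isT; lia.
have clp : coprime l p.
  by rewrite coprime_sym prime_coprime //; apply/negP => /(dvdn_leq (ltnW (ltnW l2))); lia.
case ol: (odd l).
  rewrite Gauss_dvd ?coprimeMl ?clp ?andbT; last by rewrite coprime2n.
  by rewrite Gauss_dvd ?coprime2n // dvdn2 em lm pm.
by rewrite Gauss_dvd // lm pm.
Qed.

Section Spec.
Variables (p l : nat) (w : 'F_p).
Hypotheses (pr : prime p) (op : odd p) (l2 : (2 < l)%N) (lp : (l %| p.-1)%N)
  (wp : l.-primitive_root w).

Definition kk := (if odd l then 2 * l else l)%N.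
Definition nn := (if odd l then 2 * l * p else l * p)%N.

Lemma nnE : nn = (kk * p)%N.
Proof. by rewrite /nn /kk; case: (odd l). Qed.

Lemma kk_even : ~~ odd kk.
Proof. by rewrite /kk; case ol: (odd l) => /=; rewrite ?ol // oddM. Qed.

Lemma l_kk : (l %| kk)%N.
Proof. by rewrite /kk; case: (odd l) => //; apply: dvdn_mull. Qed.

Lemma two_nz : (2%:R : 'F_p) != 0.
Proof.
rewrite -(dvdn_pcharf (pchar_Fp pr)); apply/negP => /(dvdn_leq (isT : (0 < 2)%N)) h.
have p1 := prime_gt1 pr; have e : p = 2%N by lia.
by move: op; rewrite e.
Qed.

Lemma m1_neq1 : (-1 : 'F_p) != 1.
Proof.
apply/negP => /eqP h; move/eqP: two_nz; apply.
by rewrite -[2%N]/(1 + 1)%N natrD -{1}h addNr.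
Qed.

Lemma w_neq1 : w != 1.
Proof.
apply/negP => /eqP h; have := prim_order_dvd wp 1; rewrite h expr1n eqxx.
by move/(dvdn_leq (isT : (0 < 1)%N)); lia.
Qed.

Lemma w_neqm1 : w != -1.
Proof.
apply/negP => /eqP h; have := prim_order_dvd wp 2; rewrite h sqrrN expr1n eqxx.
by move/(dvdn_leq (isT : (0 < 2)%N)); lia.
Qed.

Lemma w_neq0 : w != 0.
Proof.
apply/negP => /eqP h; have := prim_expr_order wp; rewrite h expr0n.
by case: l l2 => //= ? _ /eqP; rewrite eq_sym oner_eq0.
Qed.

Lemma P3_dvd : ('X - 1) * ('X + 1) * ('X - w%:P) %| ('X^kk - 1 : {poly 'F_p}).
Proof.
have -> : ('X - 1) * ('X + 1) * ('X - w%:P) =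
    \prod_(z <- [:: 1; -1; w]) ('X - z%:P) :> {poly 'F_p}.
  by rewrite !big_cons big_nil mulr1 polyCN opprK polyC1 mulrA.
apply: uniq_roots_dvdp.
  rewrite /= !rootE !hornerE expr1n subrr eqxx /=.
  rewrite -signr_odd (negbTE kk_even) expr0 subrr eqxx /=.
  by have := prim_order_dvd wp kk; rewrite l_kk => /esym/eqP ->; rewrite subrr eqxx.
rewrite uniq_rootsE /= !inE negb_or eq_sym m1_neq1 eq_sym w_neq1 eq_sym w_neqm1.
by [].
Qed.

Lemma frob : ('X^kk - 1 : {poly 'F_p}) ^+ p = 'X^nn - 1.
Proof.
have ch : [char {poly 'F_p}].-nat p.
  rewrite (eq_pnat _ (pcharf_eq (_ : p \in [char {poly 'F_p}]))) ?pnat_id //.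
  by rewrite pchar_poly pchar_Fp.
by rewrite exprDn_pchar // -exprM -nnE -signr_odd op expr1 -polyC1.
Qed.


Definition gg (e1 e2 e3 : nat) : {poly 'F_p} :=
  ('X - 1) ^+ e1 * ('X + 1) ^+ e2 * ('X - w%:P) ^+ e3.

Lemma Xp1 : ('X + 1 : {poly 'F_p}) = 'X - (-1)%:P.
Proof. by rewrite polyCN opprK polyC1. Qed.

Lemma Xm1 : ('X - 1 : {poly 'F_p}) = 'X - 1%:P.
Proof. by rewrite polyC1. Qed.

Lemma gg_dvd e1 e2 e3 : (e1 <= 2)%N -> (e2 <= 2)%N -> (e3 <= 2)%N ->
  gg e1 e2 e3 %| 'X^nn - 1.
Proof.
move=> h1 h2 h3; rewrite -frob.
apply: (@dvdp_trans _ ((('X - 1) * ('X + 1) * ('X - w%:P)) ^+ 2)).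
  rewrite !exprMn; apply: dvdp_mul; last exact: dvdp_exp2l.
  by apply: dvdp_mul; apply: dvdp_exp2l.
apply: (@dvdp_trans _ ((('X - 1) * ('X + 1) * ('X - w%:P)) ^+ p)).
  by apply: dvdp_exp2l; apply: prime_gt1.
exact: dvdp_exp2r P3_dvd.
Qed.

Lemma gg_size e1 e2 e3 : size (gg e1 e2 e3) = (e1 + e2 + e3).+1.
Proof.
rewrite /gg Xp1 Xm1 !size_mul ?size_exp_XsubC //; first by rewrite /=; lia.
- by rewrite expf_neq0 // polyXsubC_eq0.
- by rewrite expf_neq0 // polyXsubC_eq0.
- by rewrite mulf_neq0 // expf_neq0 // polyXsubC_eq0.
- by rewrite expf_neq0 // polyXsubC_eq0.
Qed.

Lemma gg_0 e1 e2 e3 : (gg e1 e2 e3).[0] != 0.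
Proof.
rewrite /gg !hornerE !mulf_neq0 // expf_neq0 // ?oppr_eq0 ?oner_eq0 ?w_neq0 //.
Qed.


Lemma gg_roots e1 e2 e3 c : (0 < e1)%N -> (0 < e2)%N -> (0 < e3)%N ->
  gg e1 e2 e3 %| c -> [/\ c.[1] = 0, c.[-1] = 0 & c.[w] = 0].
Proof.
move=> h1 h2 h3 gd; split; apply: dvd_root; apply: dvdp_trans gd.
- rewrite /gg Xm1; apply: dvdp_mulr; apply: dvdp_mulr.
  by rewrite -{1}(expr1 ('X - 1%:P)) dvdp_exp2l.
- rewrite /gg Xp1; apply: dvdp_mulr; apply: dvdp_mull.
  by rewrite -{1}(expr1 ('X - (-1)%:P)) dvdp_exp2l.
- rewrite /gg; apply: dvdp_mull.
  by rewrite -{1}(expr1 ('X - w%:P)) dvdp_exp2l.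
Qed.

Section H.
Variables e1 e2 e3 : nat.
Hypotheses (h1 : (0 < e1)%N) (h2 : (0 < e2)%N) (h3 : (0 < e3)%N).
Hypothesis Hd : exists r : 'F_p, r != 0 /\ ('X - r%:P) ^+ 2 %| gg e1 e2 e3.

Lemma H2gg (a b : 'F_p) m : a != 0 -> b != 0 -> (0 < m < nn)%N ->
  ~~ (gg e1 e2 e3 %| a%:P + b *: 'X^m).
Proof.
move=> a0 b0 /andP [m0 mn]; apply/negP => gd.
have [r1 rm1 rw] := gg_roots h1 h2 h3 gd.
have [r [r0 rd]] := Hd.
have dr := dvd_deriv (dvdp_trans rd gd).
move: r1 rm1 rw dr; rewrite derivD derivC derivZ derivXn add0r !hornerE expr1n mulr1.
move=> r1 rm1 rw dr.
have hm1 : (-1) ^+ m = (1 : 'F_p).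
  apply/eqP; rewrite -subr_eq0; apply/eqP.
  have : b * ((-1) ^+ m - 1) = (a + b * (-1) ^+ m) - (a + b) by ring.
  by rewrite rm1 r1 subrr => /eqP; rewrite mulf_eq0 (negbTE b0) /= => /eqP.
have em : ~~ odd m.
  apply/negP => om; move: hm1; rewrite -signr_odd om expr1 => /eqP.
  by rewrite (negbTE m1_neq1).
have lm : (l %| m)%N.
  rewrite (prim_order_dvd wp); rewrite -subr_eq0.
  have : b * (w ^+ m - 1) = (a + b * w ^+ m) - (a + b) by ring.
  by rewrite rw r1 subrr => /eqP; rewrite mulf_eq0 (negbTE b0).
have pm : (p %| m)%N.
  rewrite (dvdn_pcharf (pchar_Fp pr)).
  move/eqP: dr; rewrite hornerMn hornerXn mulf_eq0 (negbTE b0) /= -mulr_natr mulf_eq0 (negbTE (expf_neq0 _ r0)) /=; exact: id.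
have := ndiv pr op lp l2 em lm pm; rewrite -/nn => /(dvdn_leq m0); lia.
Qed.

Lemma H3agg (a b d : 'F_p) j : a != 0 -> b != 0 -> d != 0 -> (0 < j)%N ->
  ~~ (gg e1 e2 e3 %| a%:P + b *: 'X^j + d *: 'X^(j.+1)).
Proof.
move=> a0 b0 d0 _; apply/negP => gd.
have [r1 rm1 _] := gg_roots h1 h2 h3 gd.
exact: (alg3a two_nz b0 d0 r1 rm1).
Qed.

Lemma H3bgg (a b d : 'F_p) m : a != 0 -> b != 0 -> d != 0 -> (1 < m)%N ->
  ~~ (gg e1 e2 e3 %| a%:P + b *: 'X + d *: 'X^m).
Proof.
move=> a0 b0 d0 _; apply/negP => gd.
have [r1 rm1 _] := gg_roots h1 h2 h3 gd.
exact: (alg3b two_nz a0 b0 r1 rm1).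
Qed.

End H.


Lemma main_gen e1 e2 e3 : (0 < e1)%N -> (0 < e2)%N -> (0 < e3)%N ->
  (e1 <= 2)%N -> (e2 <= 2)%N -> (e3 <= 2)%N -> (e1 + e2 + e3 = 4)%N ->
  (exists r : 'F_p, r != 0 /\ ('X - r%:P) ^+ 2 %| gg e1 e2 e3) ->
  MDS_symbol_pair (cyclic_code nn (gg e1 e2 e3)) 6.
Proof.
move=> h1 h2 h3 u1 u2 u3 hs Hd.
set g := gg e1 e2 e3.
have gM : g %| 'X^nn - 1 := gg_dvd u1 u2 u3.
have p3 : (2 < p)%N.
  have p1 := prime_gt1 pr; rewrite ltn_neqAle p1 andbT.
  by apply/eqP => e; move: op; rewrite -e.
have n6 : (5 < nn)%N.
  rewrite nnE /kk; case: (odd l); move: l2 p3; clear; nia.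
have n0 : (0 < nn)%N by move: n6; clear; lia.
have sg : size g = 5 by rewrite gg_size hs.
have g0 : g != 0 by rewrite -size_poly_eq0 sg.
have g00 := gg_0 e1 e2 e3.
have H2 := H2gg h1 h2 h3 Hd.
have H3a := H3agg (e1 := e1) (e2 := e2) (e3 := e3) h1 h2 h3.
have H3b := H3bgg (e1 := e1) (e2 := e2) (e3 := e3) h1 h2 h3.
have lbx := @lb _ _ _ gM n0 g0 sg H2 H3a H3b g00 n6.
have cm := @code_mem _ _ _ gM n0 g0.
split; last first.
  rewrite (@code_card _ _ _ gM n0 g0 4) ?sg //; last by move: n6; clear; lia.
  by rewrite card_Fp //; congr (_ ^ _)%N; move: n6; clear; lia.
split.
  exists (poly_rV g), 0; split.
  - by rewrite cm poly_rV_K ?sg ?(ltnW n6).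
  - by rewrite cm linear0 dvdp0.
  - apply/eqP => h; move: g0; have := congr1 rVpoly h.
    by rewrite poly_rV_K ?sg ?(ltnW n6) // linear0 => ->; rewrite eqxx.
  - rewrite dist_w subr0; apply/eqP; rewrite eqn_leq (@ub _ _ n0 g) ?sg //=.
    apply: lbx; first by rewrite poly_rV_K ?sg ?(ltnW n6).
    apply/eqP => h; move: g0; have := congr1 rVpoly h.
    by rewrite poly_rV_K ?sg ?(ltnW n6) // linear0 => ->; rewrite eqxx.
move=> x y; rewrite !cm => gx gy xy; rewrite dist_w; apply: lbx.
  by rewrite linearB dvdp_sub.
by rewrite subr_eq0.
Qed.

End Spec.

Theorem proposition3p2 (p l : nat) (w : 'F_p) :
  prime p -> odd p -> (2 < l)%N -> (l %| p.-1)%N -> l.-primitive_root w ->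
  let n := (if odd l then 2 * l * p else l * p)%N in
  forall r : nat * nat * nat,
    r \in [:: (2, 1, 1); (1, 2, 1); (1, 1, 2)]%N ->
    MDS_symbol_pair
      (cyclic_code n (('X - 1) ^+ r.1.1 * ('X + 1) ^+ r.1.2 * ('X - w%:P) ^+ r.2))
      6.
Proof.
move=> pr op l2 lp wp n r; rewrite !inE => /or3P [] /eqP -> /=.
- apply: (main_gen pr op l2 lp wp) => //; exists 1; split; first exact: oner_neq0.
  by rewrite /gg -polyC1 -mulrA dvdp_mulIl.
- apply: (main_gen pr op l2 lp wp) => //; exists (-1); split.
    by rewrite oppr_eq0 oner_neq0.
  by rewrite /gg -Xp1; apply: dvdp_mulr; apply: dvdp_mull.
- apply: (main_gen pr op l2 lp wp) => //; exists w; split; first exact: w_neq0 wp.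
  by rewrite /gg; apply: dvdp_mull.
Qed.
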